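(* For any $F\in[0,1)$, any $\alpha\in(0,1]$, any $L_0>0$, and any target transport distance $W>0$, there exist a metric space $(\mathcal{X},d)$, a scoring function $s$ that is $(\alpha,L_0)$-Hölder continuous on $(\mathcal{X},d)$ (i.e. $|s(x)-s(y)|\le L_0 d(x,y)^\alpha$), a base distribution $\mathbb{P}_0$ and a skill-augmented distribution $\mathbb{P}_\pi$ on $\mathcal{X}$ such that: (i) the metric freedom of $s$ under $\mathbb{P}_0$ equals $F$; (ii) $\tilde{\mathcal{W}}_1(\mathbb{P}_\pi,\mathbb{P}_0)=W$; (iii) $\mathrm{Lift}(\pi)\ge\tfrac12 L_0(1-F)\,W$.
   Context: The metric freedom of $s$ under $\mathbb{P}_0$ is $1-r$, where $r$ is the Spearman rank correlation between $U=\tilde d(X,X')$ and $V=|s(X)-s(X')|$ for $X,X'$ i.i.d. $\sim\mathbb{P}_0$, with $\tilde d(x,y)=d(x,y)^\alpha$. $\tilde{\mathcal{W}}_1$ is the Wasserstein-1 distance with respect to $\tilde d$. $\mathrm{Lift}(\pi)=\mathbb{E}_{\mathbb{P}_\pi}[s]-\mathbb{E}_{\mathbb{P}_0}[s]$. *)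

(* Defs.v *)
From HB Require Import structures.
From mathcomp Require Import all_boot all_order all_algebra.
From mathcomp Require Import all_classical all_reals all_analysis.
Set Implicit Arguments. Unset Strict Implicit. Unset Printing Implicit Defensive.
Import Order.TTheory GRing.Theory Num.Theory.
Local Open Scope classical_set_scope.
Local Open Scope ring_scope.

Section Defs.
Context {R : realType} {dX : measure_display} {X : measurableType dX}.

Definition is_metric (dist : X -> X -> R) : Prop :=
  [/\ forall x y, 0 <= dist x y,
      forall x y, dist x y = 0 <-> x = y,
      forall x y, dist x y = dist y x &
      forall x y z, dist x z <= dist x y + dist y z].

Definition holder (alpha L0 : R) (dist : X -> X -> R) (s : X -> R) : Prop :=
  forall x y, `|s x - s y| <= L0 * (dist x y `^ alpha).

Definition dtilde (alpha : R) (dist : X -> X -> R) (x y : X) : R :=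
  dist x y `^ alpha.

Definition expect {d} {T : measurableType d} (P : {measure set T -> \bar R})
  (f : T -> R) : R := Rintegral P setT f.

Definition cdf {d} {T : measurableType d} (P : {measure set T -> \bar R})
  (f : T -> R) (t : R) : R := fine (P [set x | f x <= t]).

Definition pearson {d} {T : measurableType d} (P : {measure set T -> \bar R})
  (f g : T -> R) : R :=
  let mf := expect P f in let mg := expect P g in
  expect P (fun x => (f x - mf) * (g x - mg)) /
  Num.sqrt (expect P (fun x => (f x - mf) ^+ 2) *
            expect P (fun x => (g x - mg) ^+ 2)).

Definition spearman {d} {T : measurableType d} (P : {measure set T -> \bar R})
  (f g : T -> R) : R :=
  pearson P (fun x => cdf P f (f x)) (fun x => cdf P g (g x)).

Definition metric_freedom (alpha : R) (dist : X -> X -> R) (s : X -> R)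
  (P0 : probability X R) : R :=
  1 - spearman (P0 \x P0)%E
        (fun z : X * X => dtilde alpha dist z.1 z.2)
        (fun z : X * X => `|s z.1 - s z.2|).

Definition coupling (P Q : probability X R) (g : probability (X * X)%type R)
  : Prop :=
  forall A : set X, measurable A ->
    g (fst @^-1` A) = P A /\ g (snd @^-1` A) = Q A.

Definition wasserstein1 (c : X -> X -> R) (P Q : probability X R) : \bar R :=
  ereal_inf [set (\int[g]_z (c z.1 z.2)%:E)%E
            | g in [set g : probability (X * X)%type R | coupling P Q g]].

Definition skill_lift (s : X -> R) (Ppi P0 : probability X R) : R :=
  expect Ppi s - expect P0 s.

End Defs.

(* Main.v *)
Require Import Defs.
From HB Require Import structures.
From mathcomp Require Import all_boot all_order all_algebra.
From mathcomp Require Import all_classical all_reals all_analysis.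
From mathcomp Require Import ring lra.
Import Order.TTheory GRing.Theory Num.Theory.
Local Open Scope classical_set_scope.
Local Open Scope ring_scope.

Definition T3 := 'I_3.
HB.instance Definition _ := Finite.on T3.
HB.instance Definition _ := isPointed.Build T3 ord0.
HB.instance Definition _ := @isMeasurable.Build default_measure_display
  T3 discrete_measurable discrete_measurable0
  discrete_measurableC discrete_measurableU.

Section fin.
Context d (T : measurableType d) (R : realType).

Lemma all_meas (e : seq T) : (forall x, x \in e) -> (forall x : T, measurable [set x]) ->
  forall A : set T, measurable A.
Proof.
move=> He H1 A.
have -> : A = \big[setU/set0]_(i <- e | `[< A i >]) [set i].
  apply/seteqP; split => x.
    move=> Ax; rewrite -bigcup_seq_cond; exists x => //=; rewrite He; exact/asboolP.
  rewrite -bigcup_seq_cond => -[y /= /andP[_ /asboolP Ay] ->] //.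
by rewrite big_mkcond; apply: bigsetU_measurable => i _; case: ifP.
Qed.

Lemma fin_integral (mu : {measure set T -> \bar R}) (e : seq T) (f : T -> R) :
  uniq e -> (forall x, x \in e) -> (forall x : T, measurable [set x]) ->
  (\int[mu]_(x in setT) (f x)%:E = \sum_(i <- e) ((f i)%:E * mu [set i]))%E.
Proof.
move=> ue He H1.
have hT : [set: T] = \big[setU/set0]_(i <- e) [set i].
  apply/seteqP; split => x // _; rewrite -bigcup_seq; exists x => //=; exact: He.
rewrite hT integral_bigsetU_EFin //.
- apply: eq_bigr => i _.
  rewrite (@eq_integral _ _ _ _ _ (fun _ => (f i)%:E)); last by move=> x; rewrite inE => ->.
  by rewrite integral_cst.
- by move=> i j _ _ [x [/= -> ->]].
- move=> _ Y _; exact: (@all_meas e He H1).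
Qed.
End fin.

Lemma fin_measure d (T : measurableType d) (R : realType)
  (mu : {measure set T -> \bar R}) (e : seq T) (A : set T) :
  uniq e -> (forall x, x \in e) -> (forall x : T, measurable [set x]) ->
  mu A = (\sum_(i <- e) ((\1_A i)%:E * mu [set i]))%E.
Proof.
move=> ue He H1; rewrite -(@fin_integral _ _ _ mu e _ ue He H1).
by rewrite integral_indic ?setIT //; exact: (@all_meas _ _ e He H1).
Qed.

Section P0def.
Context (R : realType).

Definition tc (t : R) : R := (Num.min (Num.max t 0) (2^-1))%R.
Lemma tc_ge0 t : (0 <= tc t)%R.
Proof. by rewrite /tc le_min le_max lexx orbT /= invr_ge0 ler0n. Qed.
Lemma tc_le t : (tc t <= 2^-1)%R.
Proof. by rewrite /tc ge_min lexx orbT. Qed.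

Definition wt (t : R) (i : T3) : R :=
  if val i == 0%N then tc t else if val i == 1%N then 2^-1 else (2^-1 - tc t)%R.
Lemma wt_ge0 t i : (0 <= wt t i)%R.
Proof.
rewrite /wt; case: ifP => _; first exact: tc_ge0.
case: ifP => _; first by rewrite invr_ge0 ler0n.
by rewrite subr_ge0 tc_le.
Qed.

Local Open Scope ereal_scope.
Definition P0f (t : R) (A : set T3) : \bar R :=
  \sum_(i : T3) (wt t i)%:E * \d_i A.

Let P0f0 t : P0f t set0 = 0.
Proof. by rewrite /P0f big1 // => i _; rewrite measure0 mule0. Qed.
Let P0f_ge0 t A : 0 <= P0f t A.
Proof. by apply: sume_ge0 => i _; apply: mule_ge0; rewrite ?lee_fin ?wt_ge0. Qed.
Let P0f_sa t : semi_sigma_additive (P0f t).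
Proof.
move=> F mF tF mUF; rewrite [X in _ --> X](_ : _ =
    lim ((fun n => \sum_(0 <= i < n) P0f t (F i)) @ \oo)).
  by apply: is_cvg_ereal_nneg_natsum => k _; exact: P0f_ge0.
rewrite nneseries_sum//; last first.
  by move=> i j _; apply: mule_ge0; rewrite ?lee_fin ?wt_ge0.
apply: eq_bigr => /= i _.
rewrite nneseriesZl // measure_semi_bigcup //.
Qed.

HB.instance Definition _ t := isMeasure.Build _ _ _ (P0f t) (P0f0 t) (P0f_ge0 t) (P0f_sa t).

Lemma P0f_setT t : P0f t setT = 1.
Proof.
rewrite /P0f (eq_bigr (fun i => (wt t i)%:E)); last first.
  by move=> i _; rewrite diracT mule1.
rewrite sumEFin; congr EFin.
rewrite (@big_ord_recl _ _ _ 2) /= big_ord_recl big_ord1 /wt /=.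
lra.
Qed.
HB.instance Definition _ (t : R) := Measure_isProbability.Build _ _ _ (P0f t) (P0f_setT t).
End P0def.
Arguments P0f {R}.
Arguments tc {R}.
Arguments wt {R}.

Lemma Rint_fin d (T : measurableType d) (R : realType)
  (mu : {measure set T -> \bar R}) (e : seq T) (f : T -> R) (m : T -> R) :
  uniq e -> (forall x, x \in e) -> (forall x : T, measurable [set x]) ->
  (forall x, mu [set x] = (m x)%:E) ->
  Rintegral mu setT f = \sum_(i <- e) f i * m i.
Proof.
move=> ue He H1 Hm; rewrite /Rintegral (@fin_integral _ _ _ mu e _ ue He H1).
under eq_bigr do rewrite Hm -EFinM.
by rewrite sumEFin.
Qed.

Lemma fine_meas d (T : measurableType d) (R : realType)
  (mu : {measure set T -> \bar R}) (e : seq T) (A : set T) (m : T -> R) :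
  uniq e -> (forall x, x \in e) -> (forall x : T, measurable [set x]) ->
  (forall x, mu [set x] = (m x)%:E) ->
  fine (mu A) = \sum_(i <- e) \1_A i * m i.
Proof.
move=> ue He H1 Hm; rewrite (@fin_measure _ _ _ mu e A ue He H1).
under eq_bigr do rewrite Hm -EFinM.
by rewrite sumEFin.
Qed.

Lemma in_setb (T : Type) (b : T -> bool) x : (x \in [set y | b y]) = b x.
Proof. by apply/idP/idP; rewrite inE. Qed.

Definition p0 : T3 := @Ordinal 3 0 isT.
Definition p1 : T3 := @Ordinal 3 1 isT.
Definition p2 : T3 := @Ordinal 3 2 isT.
Definition e3 : seq T3 := [:: p0; p1; p2].
Definition e9 : seq (T3 * T3) := [:: (p0,p0); (p0,p1); (p0,p2); (p1,p0); (p1,p1); (p1,p2); (p2,p0); (p2,p1); (p2,p2)].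
Lemma e3_uniq : uniq e3. Proof. by []. Qed.
Lemma e9_uniq : uniq e9. Proof. by []. Qed.
Lemma e3_all x : x \in e3.
Proof. by case: x => [[|[|[|n]]] Hn]. Qed.
Lemma e9_all x : x \in e9.
Proof.
case: x => x y; have := e3_all x; have := e3_all y.
by rewrite !inE => /or3P[] /eqP -> /or3P[] /eqP ->.
Qed.
Lemma meas1_3 (x : T3) : measurable [set x]. Proof. by []. Qed.
Lemma meas1_9 (x : T3 * T3) : measurable [set x].
Proof.
have -> : [set x] = [set x.1] `*` [set x.2].
  by case: x => x1 x2; apply/seteqP; split => -[a b] /=; [case=> -> ->|case=> /= -> ->].
exact: measurableX.
Qed.

Section Main.
Context (R : realType).
Local Open Scope ring_scope.

Lemma P0f1 (t : R) (x : T3) : P0f t [set x] = (wt t x)%:E.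
Proof.
rewrite /P0f (bigD1 x) //= diracE mem_set // mule1 big1 ?adde0 // => i /negbTE hi.
rewrite diracE memNset ?mule0 //= => hx. by move: hi; rewrite hx eqxx.
Qed.

Lemma m2_1 (t : R) (z : T3 * T3) :
  (P0f t \x P0f t)%E [set z] = (wt t z.1 * wt t z.2)%:E.
Proof.
have -> : [set z] = [set z.1] `*` [set z.2].
  by case: z => x1 x2; apply/seteqP; split => -[a b] /=; [case=> -> ->|case=> /= -> ->].
rewrite product_measure1E //.
change (P0f t [set z.1] * P0f t [set z.2] = (wt t z.1 * wt t z.2)%:E)%E.
by rewrite !P0f1.
Qed.

Lemma m2_T (t : R) : (P0f t \x P0f t)%E setT = 1%E.
Proof.
rewrite -setXTT product_measure1E //.
change (P0f t setT * P0f t setT = 1)%E.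
by rewrite P0f_setT mule1.
Qed.

Lemma d0_1 (x : T3) : (\d_p0 : set T3 -> \bar R) [set x] = ((val x == 0%N)%:R)%:E.
Proof.
rewrite diracE; have -> : (p0 \in [set x]) = (val x == 0%N) => //.
apply/idP/eqP => [|h]; first by rewrite inE => <-.
by rewrite inE; apply/val_inj.
Qed.

Definition Sx (t : R) := tc t ^+ 2 + 2^-1 ^+ 2 + (2^-1 - tc t) ^+ 2.
Definition Qx (t : R) := 1 - 2 * tc t * (1 - tc t).

Definition Uf (K : R) (z : T3 * T3) : R := if val z.1 == val z.2 then 0 else K.
Definition Vf (M : R) (z : T3 * T3) : R :=
  if (val z.1 == 0%N) != (val z.2 == 0%N) then M else 0.

Lemma cdfU (t K : R) z : 0 < K ->
  Defs.cdf (P0f t \x P0f t)%E (Uf K) (Uf K z) = if val z.1 == val z.2 then Sx t else 1.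
Proof.
move=> K0; rewrite /Defs.cdf {2}/Uf; case: ifP => hz.
- have -> : [set x | Uf K x <= 0] = [set x | val x.1 == val x.2].
    apply/seteqP; split=> x /=; rewrite /Uf; case: ifP => //.
    by rewrite leNgt K0.
  rewrite (@fine_meas _ _ _ _ e9 _ _ e9_uniq e9_all meas1_9 (m2_1 t)) /e9 !big_cons big_nil !indicE !in_setb /=.
  rewrite /wt /Sx /=. ring.
- have -> : [set x | Uf K x <= K] = setT.
    apply/seteqP; split=> x // _ /=; rewrite /Uf; case: ifP => _ //; exact: ltW.
  by rewrite [X in fine X](_ : _ = 1%E) //; exact: m2_T.
Qed.
Lemma cdfV (t M : R) z : 0 < M ->
  Defs.cdf (P0f t \x P0f t)%E (Vf M) (Vf M z) =
  if (val z.1 == 0%N) != (val z.2 == 0%N) then 1 else Qx t.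
Proof.
move=> M0; rewrite /Defs.cdf {2}/Vf; case: ifP => hz.
- have -> : [set x | Vf M x <= M] = setT.
    apply/seteqP; split=> x // _ /=; rewrite /Vf; case: ifP => _ //; exact: ltW.
  by rewrite [X in fine X](_ : _ = 1%E) //; exact: m2_T.
- have -> : [set x | Vf M x <= 0] = [set x | ~~ ((val x.1 == 0%N) != (val x.2 == 0%N))].
    apply/seteqP; split=> x /=; rewrite /Vf; case: ifP => //.
    by rewrite leNgt M0.
  rewrite (@fine_meas _ _ _ _ e9 _ _ e9_uniq e9_all meas1_9 (m2_1 t)) /e9 !big_cons big_nil !indicE !in_setb /=.
  rewrite /wt /Qx /=. by field; rewrite ?pnatr_eq0.
Qed.

Lemma expect_m2 (t : R) (f : T3 * T3 -> R) :
  expect (P0f t \x P0f t)%E f = \sum_(z <- e9) f z * (wt t z.1 * wt t z.2).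
Proof. exact: (@Rint_fin _ _ _ _ e9 f _ e9_uniq e9_all meas1_9 (m2_1 t)). Qed.

Definition GU (t : R) (z : T3 * T3) : R := if val z.1 == val z.2 then Sx t else 1.
Definition GV (t : R) (z : T3 * T3) : R :=
  if (val z.1 == 0%N) != (val z.2 == 0%N) then 1 else Qx t.

Lemma spear (t K M : R) : 0 < K -> 0 < M ->
  spearman (P0f t \x P0f t)%E (Uf K) (Vf M) =
  ((1 - Sx t) * Sx t * (1 - Qx t) ^+ 2) /
  Num.sqrt (((1 - Sx t) ^+ 3 * Sx t) * ((1 - Qx t) ^+ 3 * Qx t)).
Proof.
move=> K0 M0; rewrite /spearman.
rewrite (_ : (fun x => _) = GU t); last by apply/funext => z; rewrite cdfU.
rewrite (_ : (fun x => _) = GV t); last by apply/funext => z; rewrite cdfV.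
rewrite /pearson /= !expect_m2 /e9 !big_cons !big_nil /=.
rewrite /GU /GV /wt /Sx /Qx /=.
congr (_ / Num.sqrt (_ * _)); by field; rewrite ?pnatr_eq0.
Qed.
End Main.
Arguments Sx {R}. Arguments Qx {R}. Arguments Uf {R}. Arguments Vf {R}. Arguments GU {R}. Arguments GV {R}.

Module IVTm.
Import numFieldTopology.Exports numFieldNormedType.Exports.
Section ivt.
Context (R : realType).
Definition S0 (x : R) := x ^+ 2 + 2^-1 ^+ 2 + (2^-1 - x) ^+ 2.
Definition Q0 (x : R) := 1 - 2 * x * (1 - x).
Definition gf (r x : R) := (1 - Q0 x) * S0 x - r ^+ 2 * (1 - S0 x) * Q0 x.

Lemma gf_root (r : R) : 0 < r <= 1 -> exists2 x, 0 < x <= 2^-1 & gf r x = 0.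
Proof.
move=> /andP[r0 r1].
pose S0p : {poly R} := 'X ^+ 2 + (2^-1 ^+ 2)%:P + ((2^-1)%:P - 'X) ^+ 2.
pose Q0p : {poly R} := 1 - 2%:P * 'X * (1 - 'X).
pose p : {poly R} := (1 - Q0p) * S0p - (r ^+ 2)%:P * (1 - S0p) * Q0p.
have hp x : gf r x = p.[x].
  by rewrite /p /S0p /Q0p /gf /S0 /Q0 !hornerE.
have h0 : gf r 0 = - (r ^+ 2 / 2).
  by rewrite /gf /S0 /Q0; field; rewrite ?pnatr_eq0.
have h1 : gf r 2^-1 = (1 - r ^+ 2) / 4.
  by rewrite /gf /S0 /Q0; field; rewrite ?pnatr_eq0.
have [|||c hc gc] := @IVT R (gf r) 0 (2^-1) 0.
- by rewrite invr_ge0 ler0n.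
- rewrite (_ : gf r = horner p); last by apply/funext => y; rewrite hp.
  have H := @continuous_horner R p. have H2 : {within `[0, 2^-1], continuous (horner p)} := continuous_subspaceT H. exact: H2.
- rewrite ge_min le_max h0 h1; apply/andP; split; apply/orP; [left|right].
    by rewrite oppr_le0 divr_ge0 // sqr_ge0.
  apply: divr_ge0; last by [].
  by rewrite subr_ge0 expr_le1 // ltW.
- exists c => //.
  move: hc; rewrite in_itv /= => /andP[c0 c1]; rewrite c1 andbT lt_neqAle c0 andbT.
  apply/eqP => hc0; move: gc; rewrite -hc0 h0 => /eqP; rewrite oppr_eq0 mulf_eq0 invr_eq0 pnatr_eq0 orbF.
  by rewrite expf_eq0 /= gt_eqF.
Qed.
End ivt.
Arguments gf {R}. Arguments S0 {R}. Arguments Q0 {R}.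
End IVTm.
Import IVTm.

Section More.
Context (R : realType).
Local Open Scope ring_scope.

Lemma int_fin_real d (T : measurableType d)
  (mu : {measure set T -> \bar R}) (e : seq T) (f : T -> R) (m : T -> R) :
  uniq e -> (forall x, x \in e) -> (forall x : T, measurable [set x]) ->
  (forall x, mu [set x] = (m x)%:E) ->
  (\int[mu]_(x in setT) (f x)%:E = (\sum_(i <- e) f i * m i)%:E)%E.
Proof.
move=> ue He H1 Hm; rewrite (@fin_integral _ _ _ mu e _ ue He H1).
under eq_bigr do rewrite Hm -EFinM.
by rewrite sumEFin.
Qed.

Lemma integrable_fin d (T : measurableType d)
  (mu : {measure set T -> \bar R}) (e : seq T) (f : T -> R) (m : T -> R) :
  uniq e -> (forall x, x \in e) -> (forall x : T, measurable [set x]) ->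
  (forall x, mu [set x] = (m x)%:E) ->
  mu.-integrable setT (EFin \o f).
Proof.
move=> ue He H1 Hm; apply/integrableP; split.
  by move=> _ Y _; exact: (@all_meas _ _ e He H1).
rewrite (@eq_integral _ _ _ _ _ (fun x => (`|f x|)%:E)) //.
by rewrite (@int_fin_real _ _ mu e _ m ue He H1 Hm) ltry.
Qed.

Lemma dtE (alpha k : R) (b : bool) : 0 < alpha -> 0 <= k ->
  (if b then 0 else k `^ alpha^-1) `^ alpha = if b then 0 else k.
Proof.
move=> a0 k0; case: b; first by rewrite powR0 // gt_eqF.
by rewrite -powRrM mulVf ?gt_eqF // powRr1.
Qed.
End More.

Lemma pre_fst (i : T3) : fst @^-1` [set i] = [set z : T3 * T3 | val z.1 == val i].
Proof.
apply/seteqP; split => -[x y] /=; first by move=> ->.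
by move=> /eqP h; apply/val_inj.
Qed.
Lemma pre_snd (i : T3) : snd @^-1` [set i] = [set z : T3 * T3 | val z.2 == val i].
Proof.
apply/seteqP; split => -[x y] /=; first by move=> ->.
by move=> /eqP h; apply/val_inj.
Qed.

Lemma prob_fin (R : realType) d (T : measurableType d) (g : probability T R) A :
  measurable A -> g A = (fine (g A))%:E.
Proof.
move=> mA; rewrite fineK // ge0_fin_numE ?measure_ge0 //.
exact: (le_lt_trans (probability_le1 _ mA) (ltry 1)).
Qed.

Theorem theorem2 (R : realType) (F alpha L0 W : R) :
  0 <= F < 1 -> 0 < alpha <= 1 -> 0 < L0 -> 0 < W ->
  exists (dX : measure_display) (X : measurableType dX)
         (dist : X -> X -> R) (s : X -> R) (P0 Ppi : probability X R),
    is_metric dist /\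
        measurable_fun setT (fun z : X * X => dist z.1 z.2) /\
        measurable_fun setT s /\
        holder alpha L0 dist s /\
        P0.-integrable setT (EFin \o s) /\
        Ppi.-integrable setT (EFin \o s) /\
        metric_freedom alpha dist s P0 = F /\
        wasserstein1 (dtilde alpha dist) Ppi P0 = W%:E /\
        skill_lift s Ppi P0 >= 2^-1 * L0 * (1 - F) * W.
Proof.
move=> /andP[F0 F1] /andP[a0 a1] L00 W0.
have [tau /andP[tau0 tau1] gt0] : exists2 x : R, 0 < x <= 2^-1 & gf (1 - F) x = 0.
  by apply: gf_root; apply/andP; split; lra.
have tcE : tc tau = tau.
  rewrite /tc (_ : Num.max tau 0 = tau); last by apply/max_idPl/ltW.
  by apply/min_idPl.
have h2 : (2^-1 : R) < 1 by rewrite invf_lt1 // ltr1n.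
pose K := W / (1 - tau).
have K0 : 0 < K by apply: divr_gt0 => //; lra.
pose kap := K `^ alpha^-1.
have kap0 : 0 < kap by apply: powR_gt0.
pose M := L0 * K.
have M0 : 0 < M by apply: mulr_gt0.
exists default_measure_display, T3,
  (fun x y : T3 => if val x == val y then 0 else kap),
  (fun x : T3 => if val x == 0%N then M else 0), (P0f tau), \d_p0.
have dtE' (x y : T3) : dtilde alpha (fun x y : T3 => if val x == val y then 0 else kap) x y
    = if val x == val y then 0 else K.
  by rewrite /dtilde dtE // ltW.
split; [|split; [|split; [|split; [|split; [|split; [|split; [|split]]]]]]].
- have d0 (b : bool) : 0 <= (if b then 0 else kap) by case: b => //; exact: ltW.
  split.
  + by move=> x y; exact: d0.
  + move=> x y; split.
      case: ifP => h; first by move=> _; apply/val_inj/eqP.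
      by move=> /eqP; rewrite gt_eqF.
    by move=> ->; rewrite eqxx.
  + by move=> x y; rewrite eq_sym.
  + move=> x y z; case: (eqVneq (val x) (val z)) => hxz.
      by rewrite addr_ge0.
    case: (eqVneq (val x) (val y)) => hxy.
      by rewrite -hxy (negbTE hxz) add0r.
    by rewrite lerDl.
- by move=> _ Y _; exact: (@all_meas _ _ e9 e9_all meas1_9).
- by move=> _ Y _; exact: (@all_meas _ _ e3 e3_all meas1_3).
- move=> x y; move: (dtE' x y); rewrite /dtilde => ->; case: (eqVneq (val x) (val y)) => h.
    have -> : x = y by exact/val_inj.
    by rewrite subrr normr0 mulr0.
  case: (val x == 0%N); case: (val y == 0%N);
    rewrite ?subrr ?normr0 ?subr0 ?sub0r ?normrN ?gtr0_norm // mulr_ge0 //; exact: ltW.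
- exact: (@integrable_fin _ _ _ _ e3 _ _ e3_uniq e3_all meas1_3 (@P0f1 R tau)).
- exact: (@integrable_fin _ _ _ _ e3 _ _ e3_uniq e3_all meas1_3 (@d0_1 R)).
- rewrite /metric_freedom.
  have -> : (fun z : T3 * T3 => dtilde alpha (fun x y : T3 => if val x == val y then 0 else kap) z.1 z.2) = Uf K.
    by apply/funext => z; rewrite dtE'.
  have -> : (fun z : T3 * T3 => `|(if val z.1 == 0%N then M else 0) - (if val z.2 == 0%N then M else 0)|) = Vf M.
    apply/funext => z; rewrite /Vf.
    by case: (val z.1 == 0%N); case: (val z.2 == 0%N); rewrite /= ?subrr ?normr0 ?subr0 ?sub0r ?normrN ?gtr0_norm.
  rewrite spear // /Sx /Qx tcE.
  move: gt0; rewrite /gf /S0 /Q0.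
  set S := tau ^+ 2 + 2^-1 ^+ 2 + (2^-1 - tau) ^+ 2; set Q := 1 - 2 * tau * (1 - tau).
  set r := 1 - F => gt0.
  have r0 : 0 < r by rewrite /r; lra.
  have S0 : 0 < S by rewrite /S; nra.
  have S1 : S < 1 by rewrite /S; nra.
  have Q0 : 0 < Q by rewrite /Q; nra.
  have Q1 : Q < 1 by rewrite /Q; nra.
  set C := (1 - S) * S * (1 - Q) ^+ 2.
  have C0 : 0 < C by rewrite /C; apply: mulr_gt0; [apply: mulr_gt0|apply: exprn_gt0]; lra.
  have e : r ^+ 2 * (((1 - S) ^+ 3 * S) * ((1 - Q) ^+ 3 * Q)) = C ^+ 2.
    have -> : r ^+ 2 * (((1 - S) ^+ 3 * S) * ((1 - Q) ^+ 3 * Q)) =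
      (1 - S) ^+ 2 * S * (1 - Q) ^+ 3 * (r ^+ 2 * (1 - S) * Q) by ring.
    have -> : r ^+ 2 * (1 - S) * Q = (1 - Q) * S by rewrite (subr0_eq gt0).
    by rewrite /C; ring.
  have -> : ((1 - S) ^+ 3 * S) * ((1 - Q) ^+ 3 * Q) = (C / r) ^+ 2.
    rewrite expr_div_n -e; field; lra.
  rewrite sqrtr_sqr gtr0_norm; last by apply: divr_gt0.
  have -> : C / (C / r) = r by field; apply/andP; split; lra.
  by rewrite /r; ring.
- rewrite /wasserstein1.
  have Hc (g : probability (T3 * T3)%type R) : coupling \d_p0 (P0f tau) g ->
      (\int[g]_z (dtilde alpha (fun x y : T3 => if val x == val y then 0 else kap) z.1 z.2)%:E = W%:E)%E.
    move=> Hg.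
    have [m gm] : exists m : T3 * T3 -> R, forall z, g [set z] = (m z)%:E.
      by exists (fun z => fine (g [set z])) => z; apply: prob_fin; exact: meas1_9.
    have m0 z : 0 <= m z by rewrite -lee_fin -gm measure_ge0.
    have row (i : T3) : fine (\d_p0 [set i]) = \sum_(z <- e9) \1_[set z : T3 * T3 | val z.1 == val i] z * m z.
      by rewrite -(Hg _ (meas1_3 i)).1 pre_fst; exact: (@fine_meas _ _ _ _ e9 _ _ e9_uniq e9_all meas1_9 gm).
    have col (j : T3) : wt tau j = \sum_(z <- e9) \1_[set z : T3 * T3 | val z.2 == val j] z * m z.
      have h := (Hg _ (meas1_3 j)).2.
      have h' : g (snd @^-1` [set j]) = (wt tau j)%:E by rewrite h; exact: P0f1.
      rewrite -[wt tau j]/(fine (wt tau j)%:E) -h' pre_snd.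
      exact: (@fine_meas _ _ _ _ e9 _ _ e9_uniq e9_all meas1_9 gm).
    have r1 := row p1; have r2 := row p2; have c1 := col p1; have c2 := col p2.
    rewrite d0_1 /e9 !big_cons big_nil !indicE !in_setb /= in r1.
    rewrite d0_1 /e9 !big_cons big_nil !indicE !in_setb /= in r2.
    rewrite /e9 !big_cons big_nil !indicE !in_setb /= in c1.
    rewrite /e9 !big_cons big_nil !indicE !in_setb /= in c2.
    rewrite /wt /= tcE in c1 c2.
    rewrite (@int_fin_real R _ _ g e9 _ m e9_uniq e9_all meas1_9 gm); congr EFin.
    rewrite /e9 !big_cons big_nil !dtE' /=.
    have := m0 (p1, p0); have := m0 (p1, p1); have := m0 (p1, p2).
    have := m0 (p2, p0); have := m0 (p2, p1); have := m0 (p2, p2).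
    move=> h22 h21 h20 h12 h11 h10.
    have z10 : m (p1, p0) = 0 by lra.
    have z11 : m (p1, p1) = 0 by lra.
    have z12 : m (p1, p2) = 0 by lra.
    have z20 : m (p2, p0) = 0 by lra.
    have z21 : m (p2, p1) = 0 by lra.
    have z22 : m (p2, p2) = 0 by lra.
    have e01 : m (p0, p1) = 2^-1 by lra.
    have e02 : m (p0, p2) = 2^-1 - tau by lra.
    rewrite z10 z11 z12 z20 z21 z22 e01 e02 /K.
    by field; lra.
  have Hex : coupling \d_p0 (P0f tau) ((\d_p0 \x P0f tau)%E).
    move=> A mA; split.
    + rewrite -setXT.
      have := @product_measure1E _ _ T3 T3 R \d_p0 (P0f tau) A setT mA measurableT.
      move=> h; apply: (eq_trans h); rewrite -[RHS]mule1; congr (_ * _)%E; exact: P0f_setT.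
    + rewrite -setTX.
      have := @product_measure1E _ _ T3 T3 R \d_p0 (P0f tau) setT A measurableT mA.
      move=> h; apply: (eq_trans h); rewrite -[RHS]mul1e; congr (_ * _)%E; exact: diracT.
  have -> : [set (\int[g]_z (dtilde alpha (fun x y : T3 => if val x == val y then 0 else kap) z.1 z.2)%:E)%E
            | g in [set g : probability (T3 * T3)%type R | coupling \d_p0 (P0f tau) g]] = [set W%:E].
    apply/seteqP; split => x /=.
      by move=> [g Hg <-]; exact: Hc.
    by move=> ->; exists ((\d_p0 \x P0f tau)%E) => //; exact: Hc.
  by rewrite ereal_inf1.
- have eM : M * (1 - tau) = L0 * W by rewrite /M /K; field; lra.
  have -> : skill_lift (fun x : T3 => if val x == 0%N then M else 0) \d_p0 (P0f tau) = L0 * W.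
    rewrite /skill_lift /expect.
    rewrite (@Rint_fin _ _ _ _ e3 _ _ e3_uniq e3_all meas1_3 (@d0_1 R)).
    rewrite (@Rint_fin _ _ _ _ e3 _ _ e3_uniq e3_all meas1_3 (@P0f1 R tau)).
    rewrite /e3 !big_cons big_nil /wt /= tcE -eM.
    by rewrite big_nil; field.
  have LW : 0 < L0 * W by apply: mulr_gt0.
  rewrite (_ : 2^-1 * L0 * (1 - F) * W = (2^-1 * (1 - F)) * (L0 * W)); last by ring.
  have hh : 2^-1 * (1 - F) <= 1 by lra.
  rewrite -[X in _ <= X]mul1r; apply: ler_wpM2r => //; exact: ltW.
Qed.
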